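(* Let $\lambda_0,\dots,\lambda_n,\eta_n\in\mathbb{C}$, $a\neq b$ real, and suppose $E_{(\lambda_0,\dots,\lambda_{n-1},\lambda_n)}$, $E_{(\lambda_0,\dots,\lambda_{n-1},\eta_n)}$ and $E_{(\lambda_0,\dots,\lambda_{n-1})}$ are extended Chebyshev systems for $\{a,b\}$. If for some $k\in\{0,\dots,n\}$ one has $p_{(\lambda_0,\dots,\lambda_{n-1},\lambda_n),k}(x)=p_{(\lambda_0,\dots,\lambda_{n-1},\eta_n),k}(x)$ for all $x\in(a,b)$, then $\lambda_n=\eta_n$. (Since the spaces do not depend on the ordering of the eigenvalues, the same holds with $\lambda_n$ replaced by any other eigenvalue.)
   Context: $E_{(\lambda_0,\dots,\lambda_m)}$ denotes the space of all $f\in C^\infty(\mathbb{R},\mathbb{C})$ with $(\frac{d}{dx}-\lambda_0)\cdots(\frac{d}{dx}-\lambda_m)f=0$ (dimension $m+1$, independent of the ordering of the $\lambda_j$). A zero of order (exactly) $k$ at $a$ means $f(a)=\dots=f^{(k-1)}(a)=0$, $f^{(k)}(a)\neq0$. $E_{(\lambda_0,\dots,\lambda_m)}$ is an extended Chebyshev system for $A\subset\mathbb{R}$ if every nonzero element has at most $m$ zeros in $A$ counted with multiplicity. In that case, for $A=\{a,b\}$, $a\ne b$, the Bernstein basis $p_{(\lambda_0,\dots,\lambda_m),k}$, $k=0,\dots,m$, is the unique family in $E_{(\lambda_0,\dots,\lambda_m)}$ with $p_{(\lambda_0,\dots,\lambda_m),k}$ having a zero of order exactly $k$ at $a$ and exactly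 $m-k$ at $b$, and $p^{(k)}_{(\lambda_0,\dots,\lambda_m),k}(a)=1$. *)

(* Defs.v *)
From Stdlib Require Import Reals List.
Open Scope R_scope.

Definition Cx := (R * R)%type.
Definition Cadd (z w : Cx) : Cx := (fst z + fst w, snd z + snd w).
Definition Csub (z w : Cx) : Cx := (fst z - fst w, snd z - snd w).
Definition Cmul (z w : Cx) : Cx :=
  (fst z * fst w - snd z * snd w, fst z * snd w + snd z * fst w).
Definition C0 : Cx := (0, 0).
Definition C1 : Cx := (1, 0).

Definition cderiv_lim (f : R -> Cx) (x : R) (l : Cx) : Prop :=
  derivable_pt_lim (fun t => fst (f t)) x (fst l) /\
  derivable_pt_lim (fun t => snd (f t)) x (snd l).

(* A derivative tower: F k is the k-th derivative of F 0 on all of R.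
   F 0 is then C^infinity, and F is uniquely determined by F 0. *)
Definition is_tower (F : nat -> R -> Cx) : Prop :=
  forall k x, cderiv_lim (F k) x (F (S k) x).

(* (d/dx - lam) applied to a tower, giving the tower of the result. *)
Definition opTower (lam : Cx) (F : nat -> R -> Cx) : nat -> R -> Cx :=
  fun k x => Csub (F (S k) x) (Cmul lam (F k x)).

Definition applyOps (l : list Cx) (F : nat -> R -> Cx) : nat -> R -> Cx :=
  fold_right opTower F l.

(* F 0 belongs to E_l (F is its tower of derivatives). *)
Definition inE (l : list Cx) (F : nat -> R -> Cx) : Prop :=
  is_tower F /\ forall x, applyOps l F 0%nat x = C0.

(* E_l (l = (lambda_0,...,lambda_m), length m+1) is an extended Chebyshev
   system for {a,b}: every nonzero element has at most m zeros in {a,b}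
   counted with multiplicity. *)
Definition ECT_ab (l : list Cx) (a b : R) : Prop :=
  forall F, inE l F -> (exists x, F 0%nat x <> C0) ->
  forall ka kb : nat,
    (forall i, (i < ka)%nat -> F i a = C0) ->
    (forall i, (i < kb)%nat -> F i b = C0) ->
    (ka + kb < length l)%nat.

(* F 0 is the Bernstein basis element p_{l,k} for {a,b}, m = length l - 1:
   zero of order exactly k at a, exactly m-k at b, and p^(k)(a) = 1. *)
Definition is_bernstein (l : list Cx) (a b : R) (k : nat)
    (F : nat -> R -> Cx) : Prop :=
  inE l F /\
  (forall i, (i < k)%nat -> F i a = C0) /\ F k a = C1 /\
  (forall i, (i < length l - 1 - k)%nat -> F i b = C0) /\
  F (length l - 1 - k)%nat b <> C0.

(* Main.v *)
Require Import Defs.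
From Stdlib Require Import Reals Lra Lia Psatz List Classical FunctionalExtensionality.
Open Scope R_scope.

Lemma dl_plus f g x l1 l2 l : derivable_pt_lim f x l1 -> derivable_pt_lim g x l2 ->
  l = l1 + l2 -> derivable_pt_lim (fun t => f t + g t) x l.
Proof. intros H1 H2 ->; exact (derivable_pt_lim_plus f g x l1 l2 H1 H2). Qed.
Lemma dl_minus f g x l1 l2 l : derivable_pt_lim f x l1 -> derivable_pt_lim g x l2 ->
  l = l1 - l2 -> derivable_pt_lim (fun t => f t - g t) x l.
Proof. intros H1 H2 ->; exact (derivable_pt_lim_minus f g x l1 l2 H1 H2). Qed.
Lemma dl_mult f g x l1 l2 l : derivable_pt_lim f x l1 -> derivable_pt_lim g x l2 ->
  l = l1 * g x + f x * l2 -> derivable_pt_lim (fun t => f t * g t) x l.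
Proof. intros H1 H2 ->; exact (derivable_pt_lim_mult f g x l1 l2 H1 H2). Qed.
Lemma dl_scal f c x l1 l : derivable_pt_lim f x l1 ->
  l = c * l1 -> derivable_pt_lim (fun t => c * f t) x l.
Proof. intros H1 ->; exact (derivable_pt_lim_scal f c x l1 H1). Qed.
Lemma dl_expc c x : derivable_pt_lim (fun t => exp (c * t)) x (c * exp (c * x)).
Proof.
  assert (H := derivable_pt_lim_comp (fun t => c * t) exp x c (exp (c*x))).
  rewrite Rmult_comm. apply H.
  - apply dl_scal with 1. apply derivable_pt_lim_id. ring.
  - apply derivable_pt_lim_exp.
Qed.

Lemma dl_zero_int f c d x l : (forall t, c < t < d -> f t = 0) -> c < x < d ->
  derivable_pt_lim f x l -> l = 0.
Proof.
  intros Hz Hx H.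
  destruct (Req_dec l 0) as [|Hl]; [assumption|exfalso].
  assert (Hp : 0 < Rabs l) by (apply Rabs_pos_lt; auto).
  destruct (H (Rabs l) Hp) as [del Hd].
  set (h := Rmin (pos del) (Rmin (d - x) (x - c)) / 2).
  assert (Hdel := cond_pos del).
  assert (H1 : Rmin (pos del) (Rmin (d - x) (x - c)) > 0).
  { apply Rmin_glb_lt; [lra|apply Rmin_glb_lt; lra]. }
  assert (Hh : 0 < h) by (unfold h; lra).
  assert (Hh1 : h < del).
  { unfold h. assert (Rmin (pos del) (Rmin (d - x) (x - c)) <= del) by apply Rmin_l. lra. }
  assert (Hh2 : h < d - x).
  { unfold h. assert (Rmin (pos del) (Rmin (d - x) (x - c)) <= Rmin (d-x) (x-c)) by apply Rmin_r.
    assert (Rmin (d-x) (x-c) <= d - x) by apply Rmin_l. lra. }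
  assert (Hn : h <> 0) by lra.
  assert (Ha : Rabs h < del) by (rewrite Rabs_right; lra).
  specialize (Hd h Hn Ha).
  rewrite (Hz (x+h)) in Hd by lra. rewrite (Hz x) in Hd by lra.
  replace ((0 - 0) / h - l) with (- l) in Hd by (field; auto).
  rewrite Rabs_Ropp in Hd. lra.
Qed.

Lemma energy f1 f2 (al be c d : R) : c < d ->
  (forall x, derivable_pt_lim f1 x (al*f1 x - be*f2 x)) ->
  (forall x, derivable_pt_lim f2 x (al*f2 x + be*f1 x)) ->
  (forall t, c<t<d -> f1 t = 0 /\ f2 t = 0) -> forall x, f1 x = 0 /\ f2 x = 0.
Proof.
  intros Hcd H1 H2 Hz.
  set (w := fun t => exp (-2*al * t) * (f1 t * f1 t + f2 t * f2 t)).
  assert (Hw : forall x, derivable_pt_lim w x 0).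
  { intro x. unfold w.
    apply dl_mult with (l1 := -2*al*exp(-2*al*x))
      (l2 := (al*f1 x - be*f2 x) * f1 x + f1 x * (al*f1 x - be*f2 x)
            + ((al*f2 x + be*f1 x) * f2 x + f2 x * (al*f2 x + be*f1 x))).
    - apply dl_expc.
    - eapply dl_plus; [eapply dl_mult; eauto | eapply dl_mult; eauto | reflexivity].
    - ring. }
  set (pr := fun x => exist (fun l => derivable_pt_lim w x l) 0 (Hw x) : derivable_pt w x).
  assert (Hc := null_derivative_1 w pr (fun x => eq_refl)).
  intro x. set (t0 := (c+d)/2).
  assert (E : w x = w t0) by apply Hc.
  destruct (Hz t0) as [A1 A2]. unfold t0; lra.
  unfold w in E. rewrite A1, A2 in E.
  assert (Hp := exp_pos (-2*al*x)).
  assert (f1 x * f1 x + f2 x * f2 x = 0).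
  { apply Rmult_eq_reg_l with (exp (-2 * al * x)); lra. }
  split; nra.
Qed.

Lemma pair_eq (z w : Cx) : fst z = fst w -> snd z = snd w -> z = w.
Proof. destruct z, w; simpl; intros -> ->; reflexivity. Qed.

Lemma tower_agree F G c d : is_tower F -> is_tower G ->
  (forall t, c<t<d -> F 0%nat t = G 0%nat t) ->
  forall k t, c<t<d -> F k t = G k t.
Proof.
  intros HF HG H0 k. induction k as [|k IH]; [exact H0|].
  intros t Ht. destruct (HF k t) as [F1 F2]. destruct (HG k t) as [G1 G2].
  apply pair_eq.
  - assert (E := dl_minus _ _ t _ _ _ F1 G1 eq_refl).
    apply dl_zero_int with (c:=c) (d:=d) in E; auto; [lra|].
    intros s Hs. rewrite (IH s Hs). ring.
  - assert (E := dl_minus _ _ t _ _ _ F2 G2 eq_refl).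
    apply dl_zero_int with (c:=c) (d:=d) in E; auto; [lra|].
    intros s Hs. rewrite (IH s Hs). ring.
Qed.

Lemma zero_tower : is_tower (fun _ _ => C0).
Proof.
  intros k x. split; simpl; apply (derivable_pt_lim_const 0 x).
Qed.

Lemma tower_zero F : is_tower F -> (forall x, F 0%nat x = C0) -> forall k x, F k x = C0.
Proof.
  intros HF H k x.
  apply (tower_agree F (fun _ _ => C0) (x-1) (x+1) HF zero_tower); [intros; apply H| lra].
Qed.

Lemma applyOps_pt l F G x : (forall j, F j x = G j x) -> forall j, applyOps l F j x = applyOps l G j x.
Proof.
  intro H. induction l as [|lam l IH]; intro j; simpl; [apply H|].
  unfold opTower. rewrite !IH. reflexivity.
Qed.

Lemma opTower_tower lam F : is_tower F -> is_tower (opTower lam F).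
Proof.
  intros HF k x. destruct (HF k x) as [A1 A2]. destruct (HF (S k) x) as [B1 B2].
  unfold opTower, Csub, Cmul; split; simpl.
  - eapply dl_minus; [exact B1| eapply dl_minus; [eapply dl_scal; [exact A1|reflexivity] | eapply dl_scal; [exact A2|reflexivity] | reflexivity] | reflexivity].
  - eapply dl_minus; [exact B2| eapply dl_plus; [eapply dl_scal; [exact A2|reflexivity] | eapply dl_scal; [exact A1|reflexivity] | reflexivity] | reflexivity].
Qed.

Lemma applyOps_tower l F : is_tower F -> is_tower (applyOps l F).
Proof. intro H; induction l; simpl; auto using opTower_tower. Qed.

Lemma opTower_comm lam mu F k x :
  opTower mu (opTower lam F) k x = opTower lam (opTower mu F) k x.
Proof.
  unfold opTower, Csub, Cmul. apply pair_eq; simpl; ring.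
Qed.

Lemma applyOps_app l lam F : forall k x,
  applyOps (l ++ lam :: nil) F k x = opTower lam (applyOps l F) k x.
Proof.
  induction l as [|mu l IH]; intros k x; simpl; [reflexivity|].
  change (opTower mu (applyOps (l ++ lam :: nil) F) k x = opTower lam (opTower mu (applyOps l F)) k x).
  rewrite <- opTower_comm. unfold opTower at 1 3. rewrite !IH. reflexivity.
Qed.

Lemma Ccancel (z w : Cx) : Cmul z w = C0 -> w <> C0 -> z = C0.
Proof.
  destruct z as [z1 z2], w as [w1 w2]; unfold Cmul, C0; simpl; intros H Hw.
  injection H as H1 H2.
  assert (Hp : w1*w1 + w2*w2 <> 0).
  { intro E. apply Hw. assert (0 <= w1*w1) by apply Rle_0_sqr. assert (0 <= w2*w2) by apply Rle_0_sqr.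
    assert (w1*w1 = 0) by lra. assert (w2*w2 = 0) by lra.
    apply Rmult_integral in H3; apply Rmult_integral in H4.
    assert (w1 = 0) by tauto. assert (w2 = 0) by tauto. subst; reflexivity. }
  assert (z1 * (w1*w1+w2*w2) = 0).
  { replace (z1 * (w1*w1+w2*w2)) with (w1*(z1 * w1 - z2 * w2) + w2*(z1 * w2 + z2 * w1)) by ring.
    rewrite H1, H2; ring. }
  assert (z2 * (w1*w1+w2*w2) = 0).
  { replace (z2 * (w1*w1+w2*w2)) with (w1*(z1 * w2 + z2 * w1) - w2*(z1 * w1 - z2 * w2)) by ring.
    rewrite H1, H2; ring. }
  f_equal; [apply (Rmult_eq_reg_r (w1*w1+w2*w2)) | apply (Rmult_eq_reg_r (w1*w1+w2*w2))]; lra.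
Qed.

Lemma eq_g l lam P : inE (l ++ lam :: nil) P ->
  forall x, applyOps l P 1%nat x = Cmul lam (applyOps l P 0%nat x).
Proof.
  intros [_ H] x. specialize (H x). rewrite applyOps_app in H. unfold opTower in H.
  revert H. generalize (applyOps l P 1%nat x) (Cmul lam (applyOps l P 0%nat x)).
  intros [u1 u2] [v1 v2]; unfold Csub, C0; simpl; intro H. injection H as H1 H2.
  f_equal; lra.
Qed.

Theorem mainTheorem9 (lams : list Cx) (lamn etan : Cx) (a b : R) :
  a <> b ->
  ECT_ab (lams ++ lamn :: nil) a b ->
  ECT_ab (lams ++ etan :: nil) a b ->
  ECT_ab lams a b ->
  forall (k : nat), (k <= length lams)%nat ->
  forall (P Q : nat -> R -> Cx),
    is_bernstein (lams ++ lamn :: nil) a b k P ->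
    is_bernstein (lams ++ etan :: nil) a b k Q ->
    (forall x, Rmin a b < x < Rmax a b -> P 0%nat x = Q 0%nat x) ->
    lamn = etan.
Proof.
  intros Hab _ _ Hect k Hk P Q HP HQ HPQ.
  set (c := Rmin a b). set (d := Rmax a b).
  assert (Hcd : c < d).
  { unfold c, d, Rmin, Rmax; destruct (Rle_dec a b); lra. }
  destruct HP as [HPe [HPa [HPk [HPb HPb']]]].
  destruct HQ as [HQe _].
  assert (TP : is_tower P) by apply HPe.
  assert (TQ : is_tower Q) by apply HQe.
  set (g := applyOps lams P). set (h := applyOps lams Q).
  assert (Eg := eq_g _ _ _ HPe). assert (Eh := eq_g _ _ _ HQe).
  fold g in Eg. fold h in Eh.
  assert (Agr : forall j t, c < t < d -> g j t = h j t).
  { intros j t Ht. apply applyOps_pt. intro i. apply (tower_agree P Q c d TP TQ HPQ i t Ht). }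
  destruct (classic (exists t, c < t < d /\ g 0%nat t <> C0)) as [[t [Ht Hn]]|Hno].
  - assert (E : Cmul lamn (g 0%nat t) = Cmul etan (g 0%nat t)).
    { rewrite <- Eg. rewrite (Agr 1%nat t Ht), Eh, <- (Agr 0%nat t Ht). reflexivity. }
    assert (Cmul (Csub lamn etan) (g 0%nat t) = C0).
    { revert E. generalize (g 0%nat t). destruct lamn, etan. intros [w1 w2].
      unfold Cmul, Csub, C0; simpl. intro E. injection E as E1 E2. f_equal; lra. }
    apply Ccancel in H; auto. destruct lamn, etan. unfold Csub, C0 in H; simpl in H.
    injection H as H1 H2. f_equal; lra.
  - exfalso.
    assert (Tg : is_tower g) by (apply applyOps_tower; auto).
    assert (Z : forall x, fst (g 0%nat x) = 0 /\ snd (g 0%nat x) = 0).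
    { apply (energy (fun x => fst (g 0%nat x)) (fun x => snd (g 0%nat x)) (fst lamn) (snd lamn) c d Hcd).
      - intro x. destruct (Tg 0%nat x) as [D1 _]. rewrite Eg in D1. exact D1.
      - intro x. destruct (Tg 0%nat x) as [_ D2]. rewrite Eg in D2. simpl in D2.
        replace (fst lamn * snd (g 0%nat x) + snd lamn * fst (g 0%nat x)) with
          (snd (Cmul lamn (g 0%nat x))) by (unfold Cmul; simpl; ring). exact D2.
      - intros t Ht. destruct (classic (g 0%nat t = C0)) as [E|E].
        + rewrite E; simpl; auto.
        + exfalso. apply Hno. exists t; auto. }
    assert (InE : inE lams P).
    { split; auto. intro x. destruct (Z x) as [Z1 Z2]. fold g.
      apply pair_eq; simpl; auto. }
    assert (NZ : exists x, P 0%nat x <> C0).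
    { apply NNPP. intro Hc. 
      assert (Hz : forall x, P 0%nat x = C0).
      { intro x. apply NNPP. intro Hx. apply Hc. exists x; auto. }
      assert (Hk0 := tower_zero P TP Hz k a). rewrite HPk in Hk0.
      unfold C1, C0 in Hk0. injection Hk0. lra. }
    assert (L := Hect P InE NZ k (length lams - k)%nat HPa).
    rewrite length_app in HPb. simpl in HPb.
    replace (length lams + 1 - 1 - k)%nat with (length lams - k)%nat in HPb by lia.
    specialize (L HPb). lia.
Qed.
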